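(* Let $N\ge2$, $\lambda\in(0,1)$ and let $\varphi_1,\dots,\varphi_N\colon[0,1]\to[0,1]$ be bi-Lipschitz maps with Lipschitz constant at most $\lambda$; let $\Phi=\{\varphi_i\}_{i=1}^N$ and $U=\{(\mu_1,\dots,\mu_{N-1})\in\mathbb{R}^{N-1}:0<\mu_1<\cdots<\mu_{N-1}<1\}$. Then for Lebesgue almost every $\mu\in U$, the pair $(\Phi,\mu)$ has no singular connection.
   Context: For $\alpha=(i_0,\dots,i_{n-1})\in\{1,\dots,N\}^n$, $\varphi^\alpha=\varphi_{i_{n-1}}\circ\cdots\circ\varphi_{i_0}$. For $\mu\in U$, $(\Phi,\mu)$ has a singular connection if there are $n\ge1$, $\alpha\in\{1,\dots,N\}^n$ and $i,j\in\{1,\dots,N-1\}$ with $\varphi^\alpha(\mu_i)=\mu_j$. *)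

(* Defs.v *)
From mathcomp Require Import all_boot all_order all_algebra.
From mathcomp Require Import reals.
Set Implicit Arguments. Unset Strict Implicit. Unset Printing Implicit Defensive.
Import Order.TTheory GRing.Theory Num.Theory.
Local Open Scope ring_scope.

Section Defs.
Variable R : realType.

Definition maps_unit_interval (f : R -> R) : Prop :=
  forall x, 0 <= x <= 1 -> 0 <= f x <= 1.

Definition bilipschitz_unit (lam : R) (f : R -> R) : Prop :=
  (forall x y, 0 <= x <= 1 -> 0 <= y <= 1 -> `|f x - f y| <= lam * `|x - y|) /\
  exists c : R, 0 < c /\
    forall x y, 0 <= x <= 1 -> 0 <= y <= 1 -> c * `|x - y| <= `|f x - f y|.

(* phi^alpha = phi_{i_{n-1}} o ... o phi_{i_0} for alpha = (i_0,...,i_{n-1}). *)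
Definition comp_word (N : nat) (phi : 'I_N -> R -> R) (alpha : seq 'I_N) (x : R) : R :=
  foldl (fun y k => phi k y) x alpha.

Definition in_U (m : nat) (mu : 'I_m -> R) : Prop :=
  (forall i, 0 < mu i < 1) /\ (forall i j : 'I_m, (i < j)%N -> mu i < mu j).

Definition singular_connection (N : nat) (phi : 'I_N -> R -> R) (mu : 'I_N.-1 -> R) : Prop :=
  exists (alpha : seq 'I_N) (i j : 'I_N.-1),
    (1 <= size alpha)%N /\ comp_word phi alpha (mu i) = mu j.

Definition lebesgue_null (m : nat) (A : ('I_m -> R) -> Prop) : Prop :=
  forall eps : R, 0 < eps ->
    exists a b : nat -> 'I_m -> R,
      (forall k i, a k i <= b k i) /\
      (forall x, A x -> exists k, forall i, a k i <= x i <= b k i) /\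
      (forall K, \sum_(k < K) \prod_(i < m) (b k i - a k i) <= eps).

End Defs.

(* Main.v *)
Require Import Defs.
From mathcomp Require Import all_boot all_order all_algebra.
From mathcomp Require Import reals.
From mathcomp Require Import ring lra zify.
From Stdlib Require Import ClassicalEpsilon Classical Cantor.
Import Order.TTheory GRing.Theory Num.Theory.
Local Open Scope ring_scope.

Section Aux.
Variable R : realType.

Lemma null_sub m (A B : ('I_m -> R) -> Prop) :
  (forall x, A x -> B x) -> lebesgue_null B -> lebesgue_null A.
Proof.
move=> AB hB eps e0; have [a [b [h1 [h2 h3]]]] := hB eps e0.
by exists a, b; split=> //; split=> // x /AB /h2.
Qed.

Lemma sum_uniq_le (T : eqType) (s s' : seq T) (F : T -> R) :
  (forall x, 0 <= F x) -> uniq s -> uniq s' -> {subset s <= s'} ->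
  \sum_(x <- s) F x <= \sum_(x <- s') F x.
Proof.
move=> F0 us us' ss'.
rewrite [X in _ <= X](bigID (fun x => x \in s)) /=. idtac.
have -> : \sum_(x <- s' | x \in s) F x = \sum_(x <- s) F x.
  rewrite -big_filter; apply: perm_big; apply: uniq_perm.
  - exact: filter_uniq.
  - exact: us.
  by move=> x; rewrite mem_filter; case xs: (x \in s) => //=; rewrite ss'.
by rewrite lerDl sumr_ge0.
Qed.

Lemma geom_le (eps : R) B : 0 <= eps ->
  \sum_(t < B) eps * (2^-1) ^+ t.+1 <= eps.
Proof.
move=> e0.
have H : forall n, \sum_(t < n) (2^-1 : R) ^+ t.+1 = 1 - (2^-1) ^+ n.
  elim=> [|n IH]; first by rewrite big_ord0 expr0 subrr.
  rewrite big_ord_recr /= IH !exprSr.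
  have h2 : (2^-1 : R) = 1 - 2^-1 by field.
  set h := (2^-1 : R) in h2 *.
  have e : h ^+ n * h = h ^+ n * (1 - h) by rewrite -h2.
  rewrite mulrBr mulr1 in e.
  lra.
rewrite -mulr_sumr H ler_piMr // gerBl exprn_ge0 // invr_ge0 //.
Qed.


Lemma prod_ge0 m (a b : 'I_m -> R) : (forall i, a i <= b i) ->
  0 <= \prod_(i < m) (b i - a i).
Proof. by move=> h; apply: prodr_ge0 => i _; rewrite subr_ge0. Qed.

Lemma null_union m (A : nat -> ('I_m -> R) -> Prop) :
  (forall t, lebesgue_null (A t)) -> lebesgue_null (fun x => exists t, A t x).
Proof.
move=> hA eps e0.
pose P (t : nat) (ab : (nat -> 'I_m -> R) * (nat -> 'I_m -> R)) :=
  (forall k i, ab.1 k i <= ab.2 k i) /\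
  (forall x, A t x -> exists k, forall i, ab.1 k i <= x i <= ab.2 k i) /\
  (forall K, \sum_(k < K) \prod_(i < m) (ab.2 k i - ab.1 k i) <= eps * (2^-1) ^+ t.+1).
have hP : forall t, exists ab, P t ab.
  move=> t.
  have ep : 0 < eps * (2^-1) ^+ t.+1 by rewrite mulr_gt0 // exprn_gt0 // invr_gt0.
  have [a [b H]] := hA t _ ep.
  by exists (a, b).
have [f hf] := choice _ hP.
exists (fun k i => (f (of_nat k).1).1 (of_nat k).2 i).
exists (fun k i => (f (of_nat k).1).2 (of_nat k).2 i).
split; first by move=> k i; have [h _] := hf (of_nat k).1; apply: h.
split.
  move=> x [t Ht]; have [_ [h _]] := hf t.
  have [l hl] := h x Ht.
  by exists (to_nat (t, l)); rewrite cancel_of_to.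
move=> K.
pose F (p : nat * nat) := \prod_(i < m) ((f p.1).2 p.2 i - (f p.1).1 p.2 i).
have F0 : forall p, 0 <= F p.
  by move=> p; apply: prod_ge0 => i; have [h _] := hf p.1; apply: h.
have -> : \sum_(k < K) \prod_(i < m) ((f (of_nat k).1).2 (of_nat k).2 i -
           (f (of_nat k).1).1 (of_nat k).2 i)
        = \sum_(p <- map of_nat (iota 0 K)) F p.
  rewrite big_map.
  have -> : iota 0 K = index_iota 0 K by rewrite /index_iota subn0.
  by rewrite big_mkord.
have := @sum_uniq_le _ [seq of_nat i | i <- iota 0 K] [seq (x, y) | x <- iota 0 K, y <- iota 0 K] F F0.
move=> H; apply: le_trans; first apply: H.
- rewrite map_inj_uniq ?iota_uniq //.
  exact: (can_inj cancel_to_of).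
- by rewrite allpairs_uniq ?iota_uniq // => -[? ?] [? ?].
- move=> p /mapP [k]; rewrite mem_iota add0n => /andP [_ kK] ->.
  case E: (of_nat k) => [x y].
  have := to_nat_non_decreasing x y; rewrite -E cancel_to_of => hk.
  apply/allpairsP; exists (x, y) => /=; rewrite !mem_iota /=.
  by split=> //; lia.
rewrite big_allpairs.
apply: le_trans (@geom_le eps K (ltW e0)).
rewrite -(big_mkord xpredT (fun t => eps * (2^-1) ^+ t.+1)).
change (\sum_(i1 <- iota 0 K) \sum_(i2 <- iota 0 K) F (i1, i2) <= \sum_(0 <= i < K) eps * 2^-1 ^+ i.+1).
have e : iota 0 K = index_iota 0 K by rewrite /index_iota subn0.
rewrite !e.
apply: ler_sum => t _.
have [_ [_ h]] := hf t.
apply: le_trans (h K).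
by rewrite (big_mkord xpredT (fun l => F (t, l))).
Qed.


Lemma hyper_null m (i : 'I_m) (c : R) :
  lebesgue_null (fun mu : 'I_m -> R => (forall k, 0 < mu k < 1) /\ mu i = c).
Proof.
move=> eps e0.
exists (fun _ k => if k == i then c else 0), (fun _ k => if k == i then c else 1).
split; first by move=> _ k; case: (k == i).
split.
  move=> x [h1 h2]; exists 0%N => k; case: eqP => [->|_]; first by rewrite h2 lexx.
  by have /andP [a b] := h1 k; rewrite !ltW.
move=> K; rewrite big1 ?ltW // => l _.
by rewrite (bigD1 i) //= eqxx subrr mul0r.
Qed.


Lemma graph_null m (i j : 'I_m) (g : R -> R) : i != j ->
  (forall x y, 0 <= x <= 1 -> 0 <= y <= 1 -> `|g x - g y| <= `|x - y|) ->
  lebesgue_null (fun mu : 'I_m -> R => (forall k, 0 < mu k < 1) /\ g (mu i) = mu j).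
Proof.
move=> ij gl eps e0.
pose M := (Num.truncn (2 / eps)).+1.
have hM : 2 / eps < M%:R.
  by have /andP[_ ?] := truncn_itv (ltW (divr_gt0 (ltr0Sn R 1) e0)).
have M0 : 0 < M%:R :> R by rewrite ltr0Sn.
pose d := (M%:R)^-1 : R.
have d0 : 0 < d by rewrite invr_gt0.
have dM : d * M%:R = 1 by rewrite mulVf // gt_eqF.
pose a l k := if (l < M)%N then (if k == i then l%:R * d else if k == j then g (l%:R * d) - d else 0) else 0.
pose b l k := if (l < M)%N then (if k == i then l.+1%:R * d else if k == j then g (l%:R * d) + d else 1) else 0.
exists a, b.
split.
  move=> l k; rewrite /a /b; case: (l < M)%N => //; case: (k == i).
    by apply: ler_wpM2r; [exact: ltW | rewrite ler_nat].
  by case: (k == j) => //; lra.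
split.
  move=> x [h1 h2].
  have /andP [xi0 xi1] := h1 i.
  pose l := Num.truncn (x i * M%:R).
  have /andP [hl1 hl2] := truncn_itv (mulr_ge0 (ltW xi0) (ltW M0)).
  have lM : (l < M)%N.
    rewrite truncn_lt_nat ?(mulr_ge0 (ltW xi0) (ltW M0)) //.
    by rewrite -[X in _ < X]mul1r ltr_pM2r.
  have lo : l%:R * d <= x i by rewrite ler_pdivrMr.
  have hi : x i <= l.+1%:R * d by rewrite ler_pdivlMr // ltW.
  exists l => k; rewrite /a /b lM.
  case: eqP => [->|ki]; first by rewrite lo hi.
  case: eqP => [->|kj]; last by have /andP[? ?] := h1 k; rewrite !ltW.
  rewrite -h2.
  have : `|g (x i) - g (l%:R * d)| <= d.
    apply: le_trans (gl _ _ _ _) _.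
    - by rewrite !ltW.
    - by apply/andP; split; [rewrite mulr_ge0 // ltW | exact: le_trans lo (ltW xi1)].
    rewrite ger0_norm ?subr_ge0 //.
    move: hi; rewrite -addn1 natrD mulrDl mul1r; lra.
  by rewrite ler_distl.
move=> K.
have vol : forall l, \prod_(k < m) (b l k - a l k) = if (l < M)%N then 2 * d * d else 0.
  move=> l; rewrite /a /b; case: (l < M)%N; last first.
    by rewrite (bigD1 i) //= subrr mul0r.
  have ji : j != i by rewrite eq_sym.
  rewrite (bigD1 i) //= eqxx (bigD1 j) //= (negbTE ji) eqxx.
  rewrite big1; last first.
    by move=> k /andP [ki kj]; rewrite (negbTE ki) (negbTE kj) subr0.
  rewrite -addn1 natrD; ring.
under eq_bigr do rewrite vol.
rewrite -(big_mkord xpredT (fun l => if (l < M)%N then 2 * d * d else 0)).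
rewrite -big_mkcond /= -big_filter.
apply: le_trans.
  apply: (@sum_uniq_le _ _ (index_iota 0 M) (fun _ => 2 * d * d)).
  - by move=> _; rewrite !mulr_ge0 ?ltW.
  - by rewrite filter_uniq // iota_uniq.
  - by rewrite iota_uniq.
  by move=> l; rewrite mem_filter !mem_iota /= => /andP [lM _]; rewrite lM.
rewrite /= sumr_const_nat subn0.
have -> : 2 * d * d *+ M = 2 * d * (d * M%:R) by rewrite mulrA mulr_natr.
rewrite dM mulr1.
rewrite ltr_pdivrMr // in hM.
by rewrite ler_pdivrMr // mulrC ltW.
Qed.


Lemma cw_props N (lam : R) (phi : 'I_N -> R -> R) : lam <= 1 ->
  (forall k, maps_unit_interval (phi k)) -> (forall k, bilipschitz_unit lam (phi k)) ->
  forall al x y, 0 <= x <= 1 -> 0 <= y <= 1 ->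
  (0 <= comp_word phi al x <= 1) /\ `|comp_word phi al x - comp_word phi al y| <= `|x - y|.
Proof.
move=> l1 hmap hlip; elim=> [|a al IH] x y hx hy; first by split.
have [hl _] := hlip a.
have [h1 h2] := IH (phi a x) (phi a y) (hmap a x hx) (hmap a y hy).
split=> //; apply: le_trans h2 _; apply: le_trans (hl x y hx hy) _.
by rewrite ler_piMl // normr_ge0.
Qed.

End Aux.

Theorem lemma4p3 (R : realType) (N : nat) (lam : R) (phi : 'I_N -> R -> R) :
  (2 <= N)%N -> 0 < lam < 1 ->
  (forall k, maps_unit_interval (phi k)) ->
  (forall k, bilipschitz_unit lam (phi k)) ->
  lebesgue_null (fun mu : 'I_N.-1 -> R => in_U mu /\ singular_connection phi mu).
Proof.
move=> N2 /andP [l0 l1] hmap hlip.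
have cwp := @cw_props R N lam phi (ltW l1) hmap hlip.
pose T := (seq 'I_N * 'I_N.-1 * 'I_N.-1)%type.
pose A (t : nat) (mu : 'I_N.-1 -> R) : Prop :=
  match (unpickle t : option T) with
  | Some (alpha, i, j) => (1 <= size alpha)%N /\ (forall k, 0 < mu k < 1) /\
                          comp_word phi alpha (mu i) = mu j
  | None => False end.
apply: (@null_sub R _ _ (fun mu => exists t, A t mu)).
  move=> mu [[hU _] [alpha [i [j [hs he]]]]]; exists (pickle (alpha, i, j)).
  by rewrite /A pickleK.
apply: null_union => t; rewrite /A.
case: (unpickle t) => [[[alpha i] j]|]; last first.
  have i0 : 'I_N.-1 by exists 0%N; case: N N2 {phi hmap hlip cwp T A} => [|[|n]].
  by apply: (@null_sub R _ _ _ _ (@hyper_null R _ i0 0)).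
case: alpha => [|a al].
  by apply: (@null_sub R _ _ _ _ (@hyper_null R _ i 0)) => mu [].
case: (eqVneq i j) => [<-|ij]; last first.
  apply: (@null_sub R _ _ _ _ (@graph_null R _ i j (comp_word phi (a :: al)) ij _)).
    by move=> mu [_ [h1 h2]].
  by move=> x y hx hy; have [] := cwp (a :: al) x y hx hy.
have hfix : forall x c, 0 <= x <= 1 -> 0 <= c <= 1 ->
    comp_word phi (a :: al) x = x -> comp_word phi (a :: al) c = c -> x = c.
  move=> x c hx hc ex ec.
  have [hl _] := hlip a.
  have h : `|x - c| <= lam * `|x - c|.
    rewrite -{1}ex -{1}ec /=.
    have [_ h2] := cwp al (phi a x) (phi a c) (hmap a x hx) (hmap a c hc).
    exact: le_trans h2 (hl x c hx hc).
  have n0 := normr_ge0 (x - c).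
  have : `|x - c| = 0 by apply/eqP; rewrite eq_le n0 andbT; nra.
  by move/eqP; rewrite normr_eq0 subr_eq0 => /eqP.
case: (classic (exists c, 0 <= c <= 1 /\ comp_word phi (a :: al) c = c)) => [[c [hc ec]]|nc].
  apply: (@null_sub R _ _ _ _ (@hyper_null R _ i c)) => mu [_ [hmu hf]]; split=> //.
  have /andP [? ?] := hmu i.
  by apply: (hfix _ _ _ hc hf ec); rewrite !ltW.
apply: (@null_sub R _ _ _ _ (@hyper_null R _ i 0)) => mu [_ [hmu hf]].
exfalso; apply: nc; exists (mu i); split=> //.
by have /andP [? ?] := hmu i; rewrite !ltW.
Qed.
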